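(* Let $\mathcal{T}$ be a planar triangulation, let $m\in\mathbb{Z}_{\ge 0}$ and $r\in\mathbb{Z}_{\ge -1}$, and let $\mathbf{r}$ be a smoothness distribution with $\mathbf{r}(\tau)\in\{r,-1\}$ for every interior edge $\tau$. Assume $\mathcal{Q}^{\mathbf{r}}$ is lower-acyclic. Let $\tau$ be an interior edge with end-points $\gamma$ and $\gamma'$ such that $\mathbf{r}(\tau)=r$. If $\tau'$ is an interior edge incident on $\gamma$ with $\mathbf{r}(\tau')=-1$, then $\mathcal{Q}^{\mathbf{s}}$ is also lower-acyclic, where $\mathbf{s}(\tau'')=\mathbf{r}(\tau'')$ for every interior edge $\tau''\neq\tau$ and $\mathbf{s}(\tau)=-1$.
   Context: $\mathcal{T}$ is a finite planar mesh: a subdivision of a closed polygonal region $\Omega\subset\mathbb{R}^2$ (possibly not simply connected) into closed polygonal faces (here triangles) meeting along straight edges and vertices. $\mathcal{T}_2,\mathcal{T}_1,\mathcal{T}_0$ denote the faces, edges and vertices; an edge or vertex is interior if it is not contained in $\partial\Omega$, and $\mathcal{T}^\circ_1,\mathcal{T}^\circ_0$ denote the interior edges and interior vertices. ${\mathcal{P}}_m$ is the space of real bivariate polynomials of total degree at most $m$; for polynomials $f_1,\dots,f_k$, $\langle f_1,\dots,f_k\rangle$ denotes the subspace of ${\mathcal{P}}_m$ consisting of all polynomial combinations $\sum g_if_i$ lying in ${\mathcal{P}}_m$. A smoothness distribution is a map $\mathbf{r}:\mathcal{T}^\circ_1\to\mathbb{Z}_{\ge -1}$. For $\tau\in\mathcal{T}^\circ_1$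 let $\ell_\tau$ be a nonzero affine-linear polynomial vanishing on $\tau$ and put $\mathfrak{J}^{\mathbf r}_\tau=\langle \ell_\tau^{\mathbf r(\tau)+1}\rangle$ (which is all of ${\mathcal{P}}_m$ when $\mathbf r(\tau)=-1$); for $\gamma\in\mathcal{T}^\circ_0$ put $\mathfrak{J}^{\mathbf r}_\gamma=\sum_{\tau\ni\gamma}\mathfrak{J}^{\mathbf r}_\tau$, the sum over interior edges containing $\gamma$. After fixing orientations of faces and edges, $\mathcal{C}$ is the chain complex $\bigoplus_{\sigma\in\mathcal{T}_2}{\mathcal{P}}_m\xrightarrow{\partial_2}\bigoplus_{\tau\in\mathcal{T}^\circ_1}{\mathcal{P}}_m\xrightarrow{\partial_1}\bigoplus_{\gamma\in\mathcal{T}^\circ_0}{\mathcal{P}}_m$ (in homological degrees $2,1,0$) whose maps are the cellular boundary maps of $\mathcal{T}$ relative to $\partial\Omega$ (incidence signs $\pm1$, boundary edges and vertices omitted). $\mathcal{I}^{\mathbf r}$ is the subcomplex $0\to\bigoplus_{\tau\in\mathcal{T}^\circ_1}\mathfrak{J}^{\mathbf r}_\tau\to\bigoplus_{\gamma\in\mathcal{T}^\circ_0}\mathfrak{J}^{\mathbf r}_\gamma$, and $\mathcal{Q}^{\mathbf r}=\mathcal{C}/\mathcal{I}^{\mathbf r}$. Then $H_2(\mathcal{Q}^{\mathbf r})$ is the spline space of piecewise polynomials in ${\mathcal{P}}_m$ on each face that are $C^{\mathbf r(\tau)}$ across each interior edge $\tau$. $\mathcal{Q}^{\mathbf r}$ is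 called lower-acyclic if $H_1(\mathcal{Q}^{\mathbf r})=H_0(\mathcal{Q}^{\mathbf r})=0$. *)

(* Defs.v *)
From HB Require Import structures.
From mathcomp Require Import all_boot all_order all_algebra.
From mathcomp Require Import reals.
From mathcomp Require Import mpoly.
Set Implicit Arguments. Unset Strict Implicit. Unset Printing Implicit Defensive.
Import Order.TTheory GRing.Theory Num.Theory.
Local Open Scope ring_scope.

Section Mesh.
Variables (R : realType) (V : finType).
Variable pos : V -> 'rV[R]_2.
Variable faces : {set {set V}}.        (* triangles, as 3-sets of vertices *)

Definition in_conv (s : {set V}) (p : 'rV[R]_2) : Prop :=
  exists lam : V -> R,
    [/\ forall x, x \in s -> 0 <= lam x,
        \sum_(x in s) lam x = 1 &
        p = \sum_(x in s) lam x *: pos x].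

Definition aff_indep (s : {set V}) : Prop :=
  forall lam : V -> R,
    \sum_(x in s) lam x = 0 -> \sum_(x in s) lam x *: pos x = 0 ->
    forall x, x \in s -> lam x = 0.

Definition face_adj : rel {set V} :=
  fun s t => [&& s \in faces, t \in faces & ~~ [disjoint s & t]].

(* A planar triangulation: a finite geometric (conforming) simplicial
   2-complex in R^2, pure (every vertex lies in a triangle), whose
   underlying region is connected. *)
Definition is_planar_triangulation : Prop :=
  [/\ forall s, s \in faces -> #|s| = 3,
      forall s, s \in faces -> aff_indep s,
      forall v : V, exists2 s, s \in faces & v \in s,
      forall s t p, s \in faces -> t \in faces ->
        in_conv s p -> in_conv t p -> in_conv (s :&: t) p &
      forall s t, s \in faces -> t \in faces -> connect face_adj s t].

(* edges are 2-sets of vertices; number of triangles containing an edge *)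
Definition nfaces_on (e : {set V}) : nat := #|[set s in faces | e \subset s]|.

Definition interior_edge (e : {set V}) : bool := (#|e| == 2) && (nfaces_on e == 2).
Definition boundary_edge (e : {set V}) : bool := (#|e| == 2) && (nfaces_on e == 1).
Definition interior_vertex (v : V) : bool :=
  [forall e : {set V}, boundary_edge e ==> (v \notin e)].

Notation poly := {mpoly R[2]}.

(* P_m : total degree <= m *)
Definition inPm (m : nat) (p : poly) : bool := (msize p <= m.+1)%N.

Definition xc (v : V) : R := pos v 0 0.
Definition yc (v : V) : R := pos v 0 1.

Definition ell (e : {set V}) : poly :=
  match enum e with
  | u :: w :: _ =>
      (yc w - yc u)%:MP * ('X_0 - (xc u)%:MP)
      - (xc w - xc u)%:MP * ('X_1 - (yc u)%:MP)
  | _ => 1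
  end.

(* incidence sign for oriented simplices (vertices ordered by enum_rank):
   (-1)^i where i is the position of the vertex of s omitted in t *)
Definition inc_sign (s t : {set V}) : poly :=
  \prod_(x in s :\: t)
     (-1) ^+ #|[set y in s | (enum_rank y < enum_rank x)%N]|.

Section Complex.
Variables (m : nat) (rr : {set V} -> int).

Definition expo (e : {set V}) : nat := absz (rr e + 1).

Definition inJedge (e : {set V}) (q : poly) : Prop :=
  inPm m q /\ exists g : poly, q = g * ell e ^+ expo e.

Definition inJvert (v : V) (q : poly) : Prop :=
  inPm m q /\
  exists g : {set V} -> poly,
    (forall e, interior_edge e -> v \in e -> inPm m (g e * ell e ^+ expo e)) /\
    q = \sum_(e : {set V} | interior_edge e && (v \in e)) g e * ell e ^+ expo e.

(* boundary maps of C (relative to the boundary) *)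
Definition bd2 (c2 : {set V} -> poly) (e : {set V}) : poly :=
  \sum_(s in faces | e \subset s) inc_sign s e * c2 s.

Definition bd1 (c1 : {set V} -> poly) (v : V) : poly :=
  \sum_(e : {set V} | interior_edge e && (v \in e)) inc_sign e [set v] * c1 e.

Definition H0_vanishes : Prop :=
  forall c0 : V -> poly, (forall v, interior_vertex v -> inPm m (c0 v)) ->
  exists c1 : {set V} -> poly,
    (forall e, interior_edge e -> inPm m (c1 e)) /\
    (forall v, interior_vertex v -> inJvert v (bd1 c1 v - c0 v)).

Definition H1_vanishes : Prop :=
  forall c1 : {set V} -> poly, (forall e, interior_edge e -> inPm m (c1 e)) ->
  (forall v, interior_vertex v -> inJvert v (bd1 c1 v)) ->
  exists c2 : {set V} -> poly,
    (forall s, s \in faces -> inPm m (c2 s)) /\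
    (forall e, interior_edge e -> inJedge e (c1 e - bd2 c2 e)).

Definition lower_acyclic : Prop := H1_vanishes /\ H0_vanishes.
End Complex.
End Mesh.

(* Main.v *)
Require Import Defs.
From HB Require Import structures.
From mathcomp Require Import all_boot all_order all_algebra.
From mathcomp Require Import reals.
From mathcomp Require Import mpoly.
Import Order.TTheory GRing.Theory Num.Theory.
Local Open Scope ring_scope.

Section Aux.
Variables (R : realType) (V : finType).
Implicit Types (p q : {mpoly R[2]}).

Lemma pm1_exp k : ((-1 : {mpoly R[2]}) ^+ k == 1) || ((-1 : {mpoly R[2]}) ^+ k == -1).
Proof.
elim: k => [|k IH]; first by rewrite expr0 eqxx.
rewrite exprS; case/orP: IH => /eqP ->; rewrite ?mulr1 ?mulrNN ?mulr1 ?eqxx ?orbT //.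
Qed.

Lemma inc_sign_pm (s t : {set V}) :
  (inc_sign R s t == 1) || (inc_sign R s t == -1).
Proof.
rewrite /inc_sign; apply: (big_ind (fun x => (x == 1) || (x == -1))).
- by rewrite eqxx.
- move=> x y /orP[] /eqP -> /orP[] /eqP ->;
  by rewrite ?mulr1 ?mul1r ?mulrNN ?mulr1 ?eqxx ?orbT.
- by move=> i _; apply: pm1_exp.
Qed.

Lemma inc_sign_sq (s t : {set V}) : inc_sign R s t * inc_sign R s t = 1.
Proof. by case/orP: (inc_sign_pm s t) => /eqP ->; rewrite ?mulr1 ?mulrNN ?mulr1. Qed.

Lemma inPm0 m : inPm m (0 : {mpoly R[2]}).
Proof. by rewrite /inPm msize0. Qed.

Lemma inPmD m p q : inPm m p -> inPm m q -> inPm m (p + q).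
Proof.
rewrite /inPm => hp hq; apply: leq_trans (msizeD_le _ _) _.
by rewrite geq_max hp hq.
Qed.

Lemma inPmN m p : inPm m p -> inPm m (- p).
Proof. by rewrite /inPm msizeN. Qed.

Lemma inPmB m p q : inPm m p -> inPm m q -> inPm m (p - q).
Proof. by move=> hp hq; apply: inPmD => //; apply: inPmN. Qed.

Lemma inPmS m (s t : {set V}) p : inPm m p -> inPm m (inc_sign R s t * p).
Proof.
by case/orP: (inc_sign_pm s t) => /eqP -> hp; rewrite ?mul1r ?mulN1r //; apply: inPmN.
Qed.

Lemma inPm_sum m (I : finType) (P : pred I) (F : I -> {mpoly R[2]}) :
  (forall i, P i -> inPm m (F i)) -> inPm m (\sum_(i | P i) F i).
Proof.
move=> h; apply: (big_ind (inPm m)); [exact: inPm0 | exact: inPmD | exact: h].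
Qed.

End Aux.

Theorem mainTheorem1 (R : realType) (V : finType) (pos : V -> 'rV[R]_2)
  (faces : {set {set V}}) (hT : is_planar_triangulation pos faces)
  (m : nat) (r : int) (hr : -1 <= r) (rr : {set V} -> int)
  (hrr : forall e, interior_edge faces e -> rr e = r \/ rr e = -1)
  (hQ : lower_acyclic pos faces m rr)
  (tau : {set V}) (g g' : V)
  (htau : interior_edge faces tau) (hends : tau = [set g; g'])
  (hrtau : rr tau = r)
  (tau' : {set V}) (htau' : interior_edge faces tau') (hg : g \in tau')
  (hrtau' : rr tau' = -1) :
  lower_acyclic pos faces m (fun e => if e == tau then -1 else rr e).
Proof.
set s := (fun e => if e == tau then -1 else rr e).
have expo_tau : expo s tau = 0%N by rewrite /expo /s eqxx.
have expo_ne : forall e, e != tau -> expo s e = expo rr e.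
  by move=> e ne; rewrite /expo /s (negbTE ne).
have JrJs : forall v q, inJvert pos faces m rr v q -> inJvert pos faces m s v q.
  move=> v q [hq [h [hh hqe]]]; split => //.
  exists (fun e : {set V} => if e == tau then h e * ell pos e ^+ expo rr e else h e).
  have E : forall e, (if e == tau then h e * ell pos e ^+ expo rr e else h e)
                      * ell pos e ^+ expo s e = h e * ell pos e ^+ expo rr e.
    move=> e; case: eqP => [->|/eqP ne]; first by rewrite expo_tau expr0 mulr1.
    by rewrite expo_ne.
  split; first by move=> e he ve; rewrite E; apply: hh.
  by rewrite hqe; apply: eq_bigr => e _; rewrite E.
have JsJr : forall v q, v \notin tau ->
    inJvert pos faces m s v q -> inJvert pos faces m rr v q.
  move=> v q vt [hq [h [hh hqe]]]; split => //.
  have ne : forall e : {set V}, v \in e -> e != tau.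
    by move=> e ve; apply/eqP => et; rewrite -et ve in vt.
  exists h; split.
    by move=> e he ve; rewrite -expo_ne ?ne //; apply: hh.
  by rewrite hqe; apply: eq_bigr => e /andP[_ ve]; rewrite expo_ne ?ne.
have Jg : forall q, inPm m q -> inJvert pos faces m rr g q.
  move=> q hq; split => //.
  have e0 : expo rr tau' = 0%N by rewrite /expo hrtau'.
  exists (fun e : {set V} => if e == tau' then q else 0); split.
    move=> e _ _; case: eqP => [->|_]; first by rewrite e0 expr0 mulr1.
    by rewrite mul0r inPm0.
  rewrite (bigD1 tau') /=; last by rewrite htau' hg.
  rewrite eqxx e0 expr0 mulr1 big1 ?addr0 // => e /andP[_ ne].
  by rewrite (negbTE ne) mul0r.
have J0 : forall v, inJvert pos faces m rr v 0.
  move=> v; split; first exact: inPm0.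
  exists (fun _ => 0); split; first by move=> e _ _; rewrite mul0r inPm0.
  by rewrite big1 // => e _; rewrite mul0r.
have gg' : g != g'.
  apply/negP => /eqP gg; move: htau; rewrite /interior_edge hends gg setUid cards1.
  by [].
have tg' : g' \in tau by rewrite hends !inE eqxx orbT.
have inPm_bd1 : forall (c : {set V} -> {mpoly R[2]}) (v : V), (forall e, interior_edge faces e -> inPm m (c e)) ->
    inPm m (bd1 faces c v).
  move=> c v hc; rewrite /bd1; apply: inPm_sum => e /andP[he _]; apply: inPmS; exact: hc.
case: hQ => hQ1 hQ0.
split; last first.
  move=> c0 hc0; have [c1 [hc1 hJ]] := hQ0 c0 hc0.
  by exists c1; split => // v hv; apply: JrJs; apply: hJ.
move=> c1 hc1 hbd.
set d := bd1 faces c1 g'.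
set sg := inc_sign R tau [set g'].
set c1' := fun e => if e == tau then c1 tau - sg * d else c1 e.
have hc1' : forall e, interior_edge faces e -> inPm m (c1' e).
  move=> e he; rewrite /c1' /=; case: eqP => [_|_]; last exact: hc1.
  apply: inPmB; first exact: hc1.
  by apply: inPmS; apply: inPm_bd1.
have bd_out : forall v, v \notin tau -> bd1 faces c1' v = bd1 faces c1 v.
  move=> v vt; apply: eq_bigr => e /andP[_ ve]; rewrite /c1'.
  case: eqP => // et; by rewrite -et ve in vt.
have bd_g' : bd1 faces c1' g' = 0.
  rewrite /bd1 (bigD1 tau) /=; last by rewrite htau tg'.
  have -> : \sum_(i | (interior_edge faces i && (g' \in i)) && (i != tau))
              inc_sign R i [set g'] * c1' i =
            \sum_(i | (interior_edge faces i && (g' \in i)) && (i != tau))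
              inc_sign R i [set g'] * c1 i.
    by apply: eq_bigr => e /andP[_ ne]; rewrite /c1' (negbTE ne).
  have : d = sg * c1 tau + \sum_(i | (interior_edge faces i && (g' \in i)) && (i != tau))
              inc_sign R i [set g'] * c1 i.
    by rewrite /d /bd1 (bigD1 tau) //= htau tg'.
  rewrite /c1' eqxx -/sg => hd.
  rewrite mulrBr mulrA inc_sign_sq mul1r.
  by rewrite addrAC -hd subrr.
have hJ' : forall v : V, interior_vertex faces v -> inJvert pos faces m rr v (bd1 faces c1' v).
  move=> v hv; case vt: (v \in tau); last first.
    by rewrite bd_out ?vt //; apply: JsJr; [rewrite vt | apply: hbd].
  move: vt; rewrite hends !inE => /orP[] /eqP ->.
    by apply: Jg; apply: inPm_bd1.
  by rewrite bd_g'; apply: J0.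
have [c2 [hc2 hE]] := hQ1 c1' hc1' hJ'.
exists c2; split => // e he.
case: (eqVneq e tau) => [->|ne].
  split.
    apply: inPmB; first exact: hc1.
    by rewrite /bd2; apply: inPm_sum => f /andP[hf _]; apply: inPmS; apply: hc2.
  by exists (c1 tau - bd2 faces c2 tau); rewrite expo_tau expr0 mulr1.
have [hp [g0 hg0]] := hE e he.
rewrite /c1' (negbTE ne) in hp hg0.
by split => //; exists g0; rewrite expo_ne.
Qed.
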